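(* Let $n\ge2$ and let $K\in\mathcal S_n$ with $\mathrm{Outrad}(K)<1$. Then \[ \mathrm{ext}_c(K)=\{\,y-u:\ y\in\partial K^c,\ u\in N_{K^c}(y),\ \mathbb R^+u\text{ is an extremal ray of the cone }\mathbb R^+N_{K^c}(y)\,\}. \]
   Context: $B(x,r)$ is the closed Euclidean ball. For $A\subseteq\mathbb R^n$, $A^c=\bigcap_{x\in A}B(x,1)$ (with $\emptyset^c=\mathbb R^n$) and $\mathrm{conv}_c(A)=A^{cc}$. $\mathcal S_n$ is the class of all sets of the form $\bigcap_{x\in A}B(x,1)$, $A\subseteq\mathbb R^n$. $\mathrm{Outrad}(K)$ is the minimal $R$ such that $K\subseteq B(z,R)$ for some $z$. A point $x\in K$ is $c$-extremal for $K$ if $x\in\mathrm{conv}_c(\{y,z\})$ with $y,z\in K$ implies $y=x$ or $z=x$; $\mathrm{ext}_c(K)$ is the set of $c$-extremal points. For a convex body $T$ and $z\in\partial T$, $N_T(z)$ is the set of unit outer normals at $z$, and $\mathbb R^+N_T(z)$ is the outer normal cone. *)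

(* Defs.v *)
(* Points of R^n are row vectors 'rV[R]_n
   over an abstract R : realType, with the EUCLIDEAN inner product / norm
   defined below (the library's own norm on matrices is the sup norm, which
   induces the same topology but not the same balls). *)
From HB Require Import structures.
From mathcomp Require Import all_boot all_order all_algebra.
From mathcomp Require Import all_classical all_reals all_analysis.
Set Implicit Arguments.
Unset Strict Implicit.
Unset Printing Implicit Defensive.
Import Order.TTheory GRing.Theory Num.Theory.
Import numFieldTopology.Exports.
Local Open Scope classical_set_scope.
Local Open Scope ring_scope.

Section Defs.
Variables (R : realType) (n : nat).
Notation V := 'rV[R]_n.

Definition edot (u v : V) : R := \sum_(i < n) u ord0 i * v ord0 i.
Definition enorm (u : V) : R := Num.sqrt (edot u u).

Definition eball (x : V) (r : R) : set V := [set y | enorm (y - x) <= r].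

(* A^c = intersection of the unit balls centred at points of A (= R^n if A empty) *)
Definition cdual (A : set V) : set V := \bigcap_(x in A) eball x 1.

Definition conv_c (A : set V) : set V := cdual (cdual A).

Definition in_Sn (K : set V) : Prop := exists A : set V, K = cdual A.

Definition Outrad (K : set V) : R :=
  inf [set r : R | exists z : V, K `<=` eball z r].

Definition ext_c (K : set V) : set V :=
  [set x | K x /\ forall y z : V, K y -> K z -> conv_c [set y; z] x ->
                                  y = x \/ z = x].

Definition bdry (T : set V) : set V := closure T `\` interior T.

Definition unit_normals (T : set V) (z : V) : set V :=
  [set u | enorm u = 1 /\ forall w : V, T w -> edot u (w - z) <= 0].

Definition pos_ray (u : V) : set V := [set v | exists t : R, 0 <= t /\ v = t *: u].
Definition pos_cone (S : set V) : set V :=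
  [set v | exists t : R, exists u : V, 0 <= t /\ S u /\ v = t *: u].

Definition extremal_ray (C rho : set V) : Prop :=
  (exists u : V, u != 0 /\ rho = pos_ray u) /\ rho `<=` C /\
  forall a b : V, C a -> C b -> rho (a + b) -> rho a /\ rho b.

End Defs.

(* Main.v *)
Require Import Defs.
From HB Require Import structures.
From mathcomp Require Import all_boot all_order all_algebra.
From mathcomp Require Import all_classical all_reals all_analysis.
From mathcomp Require Import ring lra zify.
Import Order.TTheory GRing.Theory Num.Theory.
Import numFieldTopology.Exports.
Set Implicit Arguments.
Unset Strict Implicit.
Unset Printing Implicit Defensive.
Local Open Scope classical_set_scope.
Local Open Scope ring_scope.

Section Euclid.
Variables (R : realType) (n : nat).
Notation V := 'rV[R]_n.
Implicit Types u v w : V.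

Definition nq u := edot u u.

Lemma edotC u v : edot u v = edot v u.
Proof. by apply: eq_bigr => i _; rewrite mulrC. Qed.

Lemma edotDl u v w : edot (u + v) w = edot u w + edot v w.
Proof. by rewrite /edot -big_split; apply: eq_bigr => i _; rewrite mxE mulrDl. Qed.

Lemma edotDr u v w : edot w (u + v) = edot w u + edot w v.
Proof. by rewrite edotC edotDl !(edotC w). Qed.

Lemma edotZl a u v : edot (a *: u) v = a * edot u v.
Proof. by rewrite /edot mulr_sumr; apply: eq_bigr => i _; rewrite mxE mulrA. Qed.

Lemma edotZr a u v : edot v (a *: u) = a * edot v u.
Proof. by rewrite edotC edotZl edotC. Qed.

Lemma edotNl u v : edot (- u) v = - edot u v.
Proof. by rewrite -scaleN1r edotZl mulN1r. Qed.

Lemma edotNr u v : edot v (- u) = - edot v u.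
Proof. by rewrite edotC edotNl edotC. Qed.

Lemma edotBl u v w : edot (u - v) w = edot u w - edot v w.
Proof. by rewrite edotDl edotNl. Qed.

Lemma edotBr u v w : edot w (u - v) = edot w u - edot w v.
Proof. by rewrite edotDr edotNr. Qed.

Lemma edot0l u : edot 0 u = 0.
Proof. by rewrite /edot big1 // => i _; rewrite mxE mul0r. Qed.

Lemma edot0r u : edot u 0 = 0.
Proof. by rewrite edotC edot0l. Qed.

Lemma nq_ge0 u : 0 <= nq u.
Proof. by rewrite /nq /edot sumr_ge0 // => i _; rewrite -expr2 sqr_ge0. Qed.

Lemma nq_eq0 u : nq u = 0 -> u = 0.
Proof.
move=> /eqP; rewrite /nq /edot psumr_eq0; last by move=> i _; rewrite -expr2 sqr_ge0.
move=> /allP H; apply/rowP => i; rewrite mxE.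
have /H : i \in index_enum 'I_n by rewrite mem_index_enum.
by rewrite /= mulf_eq0 orbb => /eqP.
Qed.

Lemma nq0 : nq (0 : V) = 0.
Proof. by rewrite /nq edot0l. Qed.

Lemma nqD u v : nq (u + v) = nq u + 2 * edot u v + nq v.
Proof. rewrite /nq !edotDl !edotDr (edotC v u); ring. Qed.

Lemma nqB u v : nq (u - v) = nq u - 2 * edot u v + nq v.
Proof. rewrite /nq !edotBl !edotBr (edotC v u); ring. Qed.

Lemma nqZ a u : nq (a *: u) = a ^+ 2 * nq u.
Proof. rewrite /nq edotZl edotZr; ring. Qed.

Lemma nqN u : nq (- u) = nq u.
Proof. by rewrite /nq edotNl edotNr opprK. Qed.

Lemma edot_le u v : 2 * edot u v <= nq u + nq v.
Proof. have := nq_ge0 (u - v); rewrite nqB; lra. Qed.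

Lemma CS u v : edot u v ^+ 2 <= nq u * nq v.
Proof.
have [u0|u0] := eqVneq (nq u) 0.
  by rewrite (nq_eq0 u0) edot0l nq0 expr0n /= mul0r.
have pu : 0 < nq u by rewrite lt_neqAle eq_sym u0 nq_ge0.
have := nq_ge0 (v - (edot u v / nq u) *: u).
rewrite nqB nqZ edotZr (edotC v u) => H.
have : 0 <= nq u * (nq v - 2 * (edot u v / nq u * edot u v) + (edot u v / nq u) ^+ 2 * nq u).
  by rewrite mulr_ge0 // ltW.
have -> : nq u * (nq v - 2 * (edot u v / nq u * edot u v) + (edot u v / nq u) ^+ 2 * nq u)
   = nq u * nq v - edot u v ^+ 2.
  by field.
by rewrite subr_ge0.
Qed.

Lemma enorm_ge0 u : 0 <= enorm u.
Proof. exact: sqrtr_ge0. Qed.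

Lemma enorm_sqr u : enorm u ^+ 2 = nq u.
Proof. by rewrite /enorm sqr_sqrtr // nq_ge0. Qed.

Lemma enorm_le u r : 0 <= r -> (enorm u <= r) = (nq u <= r ^+ 2).
Proof.
move=> r0; rewrite -enorm_sqr; apply/idP/idP => H.
  by rewrite ler_sqr // ?nnegrE ?enorm_ge0.
by rewrite -ler_sqr // ?nnegrE ?enorm_ge0.
Qed.

Lemma enorm_le1 u : (enorm u <= 1) = (nq u <= 1).
Proof. by rewrite enorm_le // expr1n. Qed.

Lemma enorm_eq1 u : (enorm u = 1) <-> (nq u = 1).
Proof.
split => H; first by rewrite -enorm_sqr H expr1n.
by rewrite /enorm /nq -/(nq u) H sqrtr1.
Qed.

Lemma edot_le_norm u v : edot u v <= enorm u * enorm v.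
Proof.
have [h|h] := lerP (edot u v) 0.
  by apply: le_trans h _; rewrite mulr_ge0 // enorm_ge0.
rewrite -ler_sqr ?nnegrE ?(ltW h) ?mulr_ge0 ?enorm_ge0 //.
by rewrite exprMn !enorm_sqr CS.
Qed.

Lemma enormD u v : enorm (u + v) <= enorm u + enorm v.
Proof.
rewrite -ler_sqr ?nnegrE ?addr_ge0 ?enorm_ge0 //.
rewrite enorm_sqr nqD sqrrD !enorm_sqr.
have := edot_le_norm u v; lra.
Qed.

Lemma enormZ a u : enorm (a *: u) = `|a| * enorm u.
Proof. by rewrite /enorm -/(nq _) nqZ sqrtrM ?sqr_ge0 // sqrtr_sqr. Qed.

Lemma enorm0 : enorm (0 : V) = 0.
Proof. by rewrite /enorm -/(nq _) nq0 sqrtr0. Qed.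

Lemma enorm_eq0 u : enorm u = 0 -> u = 0.
Proof. by move=> H; apply: nq_eq0; rewrite -enorm_sqr H expr0n. Qed.

Lemma edot_sum (I : Type) (s : seq I) (F : I -> V) v :
  edot (\sum_(i <- s) F i) v = \sum_(i <- s) edot (F i) v.
Proof.
elim: s => [|a s IH]; first by rewrite !big_nil edot0l.
by rewrite !big_cons edotDl IH.
Qed.

End Euclid.

Section Comb.
Variables (R : realType) (n : nat).
Notation V := 'rV[R]_n.
Implicit Types u v w c e : V.

Lemma in_cdual (A : set V) w : cdual A w <-> forall a, A a -> nq (w - a) <= 1.
Proof.
rewrite /cdual /eball; split => [H a Aa|H a Aa] /=.
  by rewrite -enorm_le1; exact: H.
by rewrite enorm_le1; exact: H.
Qed.

Lemma cdual_anti (A B : set V) : A `<=` B -> cdual B `<=` cdual A.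
Proof. by move=> AB w /in_cdual H; apply/in_cdual => a /AB; exact: H. Qed.

Lemma sub_cdual2 (A : set V) : A `<=` cdual (cdual A).
Proof.
move=> a Aa; apply/in_cdual => w /in_cdual /(_ a Aa).
by rewrite -nqN opprB.
Qed.

Lemma cdual3 (A : set V) : cdual (cdual (cdual A)) = cdual A.
Proof.
apply/seteqP; split; last exact: sub_cdual2.
by apply: cdual_anti; exact: sub_cdual2.
Qed.

Definition cval (s : seq (R * V)) : V := \sum_(x <- s) x.1 *: x.2.
Definition cvalid (P : V -> Prop) (s : seq (R * V)) :=
  forall x, x \in s -> 0 <= x.1 /\ P x.2.

Lemma cval_nil : cval ([::] : seq (R * V)) = 0.
Proof. by rewrite /cval big_nil. Qed.

Lemma cval_cons x s : cval (x :: s) = x.1 *: x.2 + cval s.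
Proof. by rewrite /cval big_cons. Qed.

Lemma cval_cat s1 s2 : cval (s1 ++ s2) = cval s1 + cval s2.
Proof. by rewrite /cval big_cat. Qed.

Lemma cvalid_cat P s1 s2 : cvalid P s1 -> cvalid P s2 -> cvalid P (s1 ++ s2).
Proof. by move=> H1 H2 x; rewrite mem_cat => /orP[/H1|/H2]. Qed.

Lemma cvalid_cons P x s : 0 <= x.1 -> P x.2 -> cvalid P s -> cvalid P (x :: s).
Proof. by move=> h1 h2 H y; rewrite in_cons => /orP[/eqP->|/H]. Qed.

Lemma cvalid_consE P x s : cvalid P (x :: s) -> [/\ 0 <= x.1, P x.2 & cvalid P s].
Proof.
move=> H; have [h1 h2] := H x (mem_head _ _); split => // y ys.
by apply: H; rewrite in_cons ys orbT.
Qed.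

Lemma cvalid_sub (P Q : V -> Prop) s : (forall h, P h -> Q h) -> cvalid P s -> cvalid Q s.
Proof. by move=> PQ H x /H [h1 h2]; split => //; exact: PQ. Qed.

Definition cscl (a : R) (s : seq (R * V)) := [seq (a * x.1, x.2) | x <- s].

Lemma cval_scale a s : cval (cscl a s) = a *: cval s.
Proof.
rewrite /cval /cscl big_map scaler_sumr; apply: eq_bigr => x _.
by rewrite scalerA.
Qed.

Lemma cvalid_scale P a s : 0 <= a -> cvalid P s -> cvalid P (cscl a s).
Proof.
move=> a0 H y /mapP [x xs ->] /=; have [h1 h2] := H x xs.
by split => //; rewrite mulr_ge0.
Qed.

Lemma edot_cval s w : edot (cval s) w = \sum_(x <- s) x.1 * edot x.2 w.
Proof. by rewrite /cval edot_sum; apply: eq_bigr => x _; rewrite edotZl. Qed.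

Lemma enorm_cval_le P s : cvalid P s ->
  enorm (cval s) <= \sum_(x <- s) x.1 * enorm x.2.
Proof.
elim: s => [|x s IH] H; first by rewrite cval_nil big_nil enorm0.
have [h1 h2 H'] := cvalid_consE H.
rewrite cval_cons big_cons; apply: le_trans (enormD _ _) _.
by rewrite enormZ ger0_norm // lerD // IH.
Qed.

Definition nrmz (c : V) : V := (enorm c)^-1 *: c.

Lemma enorm_gt0 c : c != 0 -> 0 < enorm c.
Proof.
move=> c0; rewrite lt_neqAle enorm_ge0 andbT eq_sym.
by apply/eqP => /enorm_eq0 /eqP; rewrite (negbTE c0).
Qed.

Lemma nq_nrmz c : c != 0 -> nq (nrmz c) = 1.
Proof.
move=> c0; rewrite /nrmz nqZ -enorm_sqr.
have := enorm_gt0 c0; move=> h; field; exact: lt0r_neq0.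
Qed.

Lemma nrmzK c : c != 0 -> enorm c *: nrmz c = c.
Proof.
by move=> c0; rewrite /nrmz scalerA mulfV ?scale1r // lt0r_neq0 // enorm_gt0.
Qed.

Lemma ALGL s e :
  cvalid (fun h => nq h = 1 /\ 2 * edot h e + nq e <= 0) s -> cval s != 0 ->
  2 * edot (nrmz (cval s)) e + nq e <= 0.
Proof.
move=> H c0.
have Hsum : \sum_(x <- s) x.1 * enorm x.2 = \sum_(x <- s) x.1.
  apply: eq_big_seq => x /H [_ [/enorm_eq1 -> _]]; by rewrite mulr1.
have Hb := enorm_cval_le H; rewrite Hsum in Hb.
have bp := enorm_gt0 c0.
have Hd : 2 * edot (cval s) e <= - (\sum_(x <- s) x.1) * nq e.
  have -> : - (\sum_(x <- s) x.1) * nq e = \sum_(x <- s) (x.1 * - nq e).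
    by rewrite -mulr_suml mulrN mulNr.
  rewrite edot_cval mulr_sumr !big_seq; apply: ler_sum => x xs.
  have [h1 [_ h2]] := H x xs.
  have : 0 <= x.1 * (- nq e - 2 * edot x.2 e) by rewrite mulr_ge0 //; lra.
  move=> h; rewrite mulrCA; lra.
rewrite /nrmz edotZl.
have h1 : - (\sum_(x <- s) x.1) * nq e <= - enorm (cval s) * nq e.
  by rewrite ler_wpM2r ?nq_ge0 // lerN2.
have h2 : 2 * edot (cval s) e <= - enorm (cval s) * nq e by apply: le_trans Hd h1.
have -> : 2 * ((enorm (cval s))^-1 * edot (cval s) e) = (enorm (cval s))^-1 * (2 * edot (cval s) e).
  by ring.
have h3 : (enorm (cval s))^-1 * (2 * edot (cval s) e) <= (enorm (cval s))^-1 * (- enorm (cval s) * nq e).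
  by rewrite ler_wpM2l // invr_ge0 ltW.
have h4 : (enorm (cval s))^-1 * (- enorm (cval s) * nq e) = - nq e.
  by field; exact: lt0r_neq0.
rewrite h4 in h3.
lra.
Qed.

End Comb.

Section Cara.
Variables (R : realType) (n : nat).
Notation V := 'rV[R]_n.
Implicit Types u v w c e : V.

Lemma lin_dep (m : nat) (h : 'I_m -> V) : (n < m)%N ->
  exists nu : 'I_m -> R, (exists i, 0 < nu i) /\ \sum_i nu i *: h i = 0.
Proof.
move=> nm.
pose H : 'M[R]_(m, n) := \matrix_(i, j) h i 0 j.
have rk : (0 < \rank (kermx H))%N.
  rewrite mxrank_ker; have := rank_leq_col H; lia.
have kn0 : kermx H != 0 by rewrite -mxrank_eq0 -lt0n.
have [i0 ri0] : exists i0, row i0 (kermx H) != 0.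
  case: (boolP [exists i, row i (kermx H) != 0]) => [/existsP //|/existsPn H1].
  move/negP: kn0; case; apply/eqP/row_matrixP => i; rewrite row0; exact: (eqP (negbNE (H1 i))).
set mu := row i0 (kermx H) in ri0.
have muH : mu *m H = 0 by rewrite /mu -row_mul mulmx_ker row0.
have rowH i : row i H = h i by apply/rowP => j; rewrite !mxE.
have sum0 : \sum_i mu 0 i *: h i = 0.
  apply: (etrans _ muH); rewrite mulmx_sum_row; apply: eq_bigr => i _; by rewrite rowH.
have [j muj] : exists j, mu 0 j != 0.
  case: (boolP [exists j, mu 0 j != 0]) => [/existsP //|/existsPn H1].
  move/negP: ri0; case; apply/eqP/rowP => j; rewrite (eqP (negbNE (H1 j))); by rewrite mxE.
have [mp|mn] := ltrP 0 (mu 0 j).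
  by exists (fun i => mu 0 i); split => //; exists j.
exists (fun i => - mu 0 i); split.
  by exists j; rewrite oppr_gt0 lt_neqAle muj.
by rewrite (eq_bigr (fun i => - (mu 0 i *: h i))) ?sumrN ?sum0 ?oppr0 // => i _; rewrite scaleNr.
Qed.

Lemma cara_step (P : V -> Prop) s : (n < size s)%N -> cvalid P s ->
  exists s', [/\ cvalid P s', (size s' < size s)%N & cval s' = cval s].
Proof.
move=> ns Hs.
set m := size s in ns *.
pose x0 : R * V := (0, 0).
pose lam (i : 'I_m) := (nth x0 s i).1.
pose h (i : 'I_m) := (nth x0 s i).2.
have mem (i : 'I_m) : nth x0 s i \in s by exact: (mem_nth x0 (ltn_ord i)).
have [nu [[i1 nu1] nusum]] := lin_dep h ns.
have [k Pk Hk] : exists2 k, 0 < nu k & forall i, 0 < nu i -> lam k / nu k <= lam i / nu i.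
  case: (@arg_minP _ _ _ i1 (fun i => 0 < nu i) (fun i => lam i / nu i) nu1) => k Pk Hk.
  by exists k.
set th := lam k / nu k.
have th0 : 0 <= th by rewrite /th divr_ge0 // ?(ltW Pk) //; have [] := Hs _ (mem k).
pose s2 := [seq (lam i - th * nu i, h i) | i <- enum 'I_m].
have cs : cval s = \sum_i lam i *: h i.
  rewrite /cval (big_nth x0) big_mkord; exact: eq_bigr.
have cs2 : cval s2 = cval s.
  rewrite cs /cval /s2 big_map big_enum /=.
  rewrite (eq_bigr (fun i => lam i *: h i - th *: (nu i *: h i))); last first.
    by move=> i _; rewrite scalerBl scalerA.
  by rewrite sumrB -scaler_sumr nusum scaler0 subr0.
have v2 : cvalid P s2.
  move=> y /mapP [i _ ->] /=; have [l0 Ph] := Hs _ (mem i); split => //.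
  have [nup|nun] := ltrP 0 (nu i).
    have := Hk i nup; rewrite subr_ge0 -/th => Hi.
    by rewrite -ler_pdivlMr // .
  by rewrite subr_ge0; apply: le_trans l0; rewrite mulr_ge0_le0.
exists [seq y <- s2 | y.1 != 0]; split.
- by move=> y; rewrite mem_filter => /andP [_ /v2].
- have sz2 : size s2 = m by rewrite size_map size_enum_ord.
  rewrite size_filter -[X in (_ < X)%N]sz2 -(count_predC (fun y => y.1 != 0) s2).
  rewrite -[X in (X < _)%N]addn0 ltn_add2l.
  rewrite -has_count /s2; apply/hasP; exists (lam k - th * nu k, h k).
    by apply/mapP; exists k => //; rewrite mem_enum.
  by rewrite /= /th divfK ?subrr ?eqxx // lt0r_neq0.
- rewrite -cs2 /cval big_filter big_mkcond /=; apply: eq_bigr => y _.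
  by case: ifPn => // /negPn /eqP ->; rewrite scale0r.
Qed.

Lemma cara (P : V -> Prop) s : cvalid P s ->
  exists s', [/\ cvalid P s', (size s' <= n)%N & cval s' = cval s].
Proof.
move: {2}(size s) (leqnn (size s)) => k; elim: k s => [|k IH] s sk Hs.
  by exists s; split => //; apply: leq_trans sk _.
have [sn|ns] := leqP (size s) n; first by exists s.
have [s1 [H1 sz1 e1]] := cara_step ns Hs.
have [s2 [H2 sz2 e2]] := IH s1 (leq_trans sz1 sk) H1.
by exists s2; split => //; rewrite e2.
Qed.

End Cara.

Section Topo.
Variables (R : realType) (n : nat).
Notation V := 'rV[R]_n.
Implicit Types u v w c e : V.

Lemma cont_sum (T : topologicalType) (I : Type) (r : seq I) (F : I -> T -> R) :
  (forall i, continuous (F i)) -> continuous (fun x => \sum_(i <- r) F i x).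
Proof.
move=> Fc; elim: r => [|a r IH].
  by under eq_fun do rewrite big_nil; exact: cst_continuous.
under eq_fun do rewrite big_cons.
by move=> x; apply: continuousD; [exact: Fc | exact: IH].
Qed.

Lemma edot_cont (T : topologicalType) (f g : T -> V) :
  continuous f -> continuous g -> continuous (fun x => edot (f x) (g x)).
Proof.
move=> fc gc; rewrite /edot; apply: cont_sum => i x.
have h1 : {for x, continuous (fun x => f x 0 i)}.
  exact: (@continuous_comp _ _ _ f (fun M : V => M 0 i) x (fc x) (@coord_continuous R 1 n 0 i (f x))).
have h2 : {for x, continuous (fun x => g x 0 i)}.
  exact: (@continuous_comp _ _ _ g (fun M : V => M 0 i) x (gc x) (@coord_continuous R 1 n 0 i (g x))).
exact: (continuousM h1 h2).
Qed.

Lemma subc_cont a : continuous (fun w : V => w - a).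
Proof.
move=> x; have h1 : {for x, continuous (@id V)} by exact: cvg_id.
have h2 : {for x, continuous (fun _ : V => a)} by exact: cst_continuous.
exact: (continuousB h1 h2).
Qed.

Lemma nq_cont a : continuous (fun w : V => nq (w - a)).
Proof. by apply: edot_cont; exact: subc_cont. Qed.

Lemma closed_nqle a (c : R) : closed [set w : V | nq (w - a) <= c].
Proof.
have -> : [set w : V | nq (w - a) <= c] = (fun w => nq (w - a)) @^-1` [set x | x <= c].
  by [].
apply: preimage_closed; last exact: closed_le.
by move=> x _; exact: nq_cont.
Qed.

Lemma closed_nqeq a (c : R) : closed [set w : V | nq (w - a) = c].
Proof.
have -> : [set w : V | nq (w - a) = c] = (fun w => nq (w - a)) @^-1` [set x | x = c].
  by [].
apply: preimage_closed; last exact: closed_eq.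
by move=> x _; exact: nq_cont.
Qed.

Lemma cdual_closed (A : set V) : closed (cdual A).
Proof.
apply: closed_bigI => a _.
have -> : eball a 1 = [set w : V | nq (w - a) <= 1].
  by apply/seteqP; split => w /=; rewrite /eball /= enorm_le1.
exact: closed_nqle.
Qed.

Lemma coord_le_enorm (x : V) i : `|x 0 i| <= enorm x.
Proof.
rewrite -ler_sqr ?nnegrE ?enorm_ge0 // enorm_sqr (real_normK (num_real _)) /nq /edot.
rewrite (bigD1 i) //= -expr2 lerDl sumr_ge0 // => j _.
by rewrite -expr2 sqr_ge0.
Qed.

Lemma mxnorm_le_enorm (x : V) : `|x| <= enorm x.
Proof.
change (mx_norm x <= enorm x); rewrite mx_normrE; apply: bigmax_le => [|[i j] _ /=].
  exact: enorm_ge0.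
by rewrite ord1; exact: coord_le_enorm.
Qed.

Lemma bounded_of_enorm (A : set V) z (B : R) :
  (forall x, A x -> enorm (x - z) <= B) -> bounded_set A.
Proof.
move=> H; exists (B + `|z|); split; first exact: num_real.
move=> M BM x Ax; apply: le_trans (ltW BM).
have -> : x = (x - z) + z by rewrite subrK.
apply: le_trans (ler_normD _ _) _; rewrite lerD2r.
by apply: le_trans (mxnorm_le_enorm _) _; apply: H.
Qed.

Lemma compact_of (A : set V) z (B : R) : closed A ->
  (forall x, A x -> enorm (x - z) <= B) -> compact A.
Proof.
move=> cA H; apply: bounded_closed_compact => //.
exact: bounded_of_enorm H.
Qed.

Lemma interior_move (L : set V) y g : (L°) y ->
  exists2 s : R, 0 < s & L (y + s *: g).
Proof.
move=> /nbhs_ballP [e e0 He].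
pose s := e / (2 * (enorm g + 1)).
have gp : 0 < enorm g + 1 by have := enorm_ge0 g; lra.
have s0 : 0 < s by rewrite /s divr_gt0 // mulr_gt0.
exists s => //; apply: He.
rewrite -ball_normE /ball_ /= opprD addrA subrr add0r normrN.
apply: le_lt_trans (mxnorm_le_enorm _) _.
rewrite enormZ gtr0_norm // /s.
have -> : e / (2 * (enorm g + 1)) * enorm g = e * (enorm g / (2 * (enorm g + 1))).
  by rewrite mulrAC mulrA.
rewrite gtr_pMr // ltr_pdivrMr ?mulr_gt0 //; have := enorm_ge0 g; lra.
Qed.

End Topo.

Section Sep.
Variables (R : realType) (n : nat).
Notation V := 'rV[R]_n.
Implicit Types u v w c e : V.
Notation PT := (prod_topology (fun _ : 'I_n => (R * V)%type)).

Lemma small_le0 (a b : R) : 0 <= b ->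
  (forall t, 0 < t -> t < 1 -> a <= t * b) -> a <= 0.
Proof.
move=> b0 H; rewrite leNgt; apply/negP => a0.
have [ab|ab] := ltrP a (b + 1).
  have bp : 0 < 2 * (b + 1) by lra.
  have t0 : 0 < a / (2 * (b + 1)) by rewrite divr_gt0.
  have t1 : a / (2 * (b + 1)) < 1 by rewrite ltr_pdivrMr //; lra.
  have := H _ t0 t1.
  have -> : a / (2 * (b + 1)) * b = a * (b / (2 * (b + 1))) by rewrite mulrAC mulrA.
  have q1 : b / (2 * (b + 1)) < 1 by rewrite ltr_pdivrMr //; lra.
  nra.
have t0 : 0 < (2:R)^-1 by rewrite invr_gt0 ltr0n.
have t1 : (2:R)^-1 < 1 by rewrite invf_lt1 ?ltr0n ?ltr1n.
have := H _ t0 t1.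
rewrite mulrC; have h2 := splitr b; set q := b / 2%:R in h2 *.
lra.
Qed.

Lemma cont_sumV (T : topologicalType) (I : Type) (r : seq I) (F : I -> T -> V) :
  (forall i, continuous (F i)) -> continuous (fun x => \sum_(i <- r) F i x).
Proof.
move=> Fc; elim: r => [|a r IH].
  by under eq_fun do rewrite big_nil; exact: cst_continuous.
under eq_fun do rewrite big_cons.
by move=> x; apply: continuousD; [exact: Fc | exact: IH].
Qed.

Definition Phi (f : PT) : V := \sum_i (f i).1 *: (f i).2.

Lemma Phi_cont : continuous Phi.
Proof.
apply: cont_sumV => i f.
have p := @proj_continuous 'I_n (fun _ => (R*V)%type) i f.
have h1 : {for f, continuous (fun f : PT => (f i).1)}.
  have hf : {for proj i f, continuous (@fst R V)} by apply: cvg_fst.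
  exact: (continuous_comp p hf).
have h2 : {for f, continuous (fun f : PT => (f i).2)}.
  have hf : {for proj i f, continuous (@snd R V)} by apply: cvg_snd.
  exact: (continuous_comp p hf).
exact: (continuousZ h1 h2).
Qed.

Lemma sum_nth_pad (s : seq (R * V)) : (size s <= n)%N ->
  \sum_(i < n) (nth (0, 0) s i).1 *: (nth (0, 0) s i).2 = cval s.
Proof.
move=> sn; rewrite /cval (big_nth (0, 0)) big_mkord.
rewrite (big_ord_widen n (fun i => (nth (0, 0) s i).1 *: (nth (0, 0) s i).2) sn).
rewrite [RHS]big_mkcond /=; apply: eq_bigr => i _.
case: ltnP => // si.
by rewrite nth_default //= scale0r.
Qed.

Lemma SEP (G : set V) (w0 : V) (c0 : R) : compact G -> 0 < c0 ->
  (forall h, G h -> c0 <= edot h w0) -> forall v,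
  ~ (exists s, cvalid G s /\ cval s = v) ->
  exists d, (forall h, G h -> edot d h <= 0) /\ 0 < edot d v.
Proof.
move=> cG c0p Gw v nv.
pose M := (4 * nq v + nq w0) / (2 * c0).
have M0 : 0 <= M by rewrite /M divr_ge0 ?addr_ge0 ?mulr_ge0 ?nq_ge0 // ltW // mulr_gt0.
pose G0 := G `|` [set 0].
have cG0 : compact G0 by apply: compactU => //; exact: compact_set1.
pose A := `[0, M] `*` G0.
have cA : compact A by apply: compact_setX => //; exact: segment_compact.
pose D := [set f : PT | forall i, A (f i)].
have cD : compact D by exact: (@tychonoff 'I_n (fun _ => (R * V)%type) (fun _ => A) (fun _ => cA)).
have cP : compact (Phi @` D).
  by apply: continuous_compact => //; apply: continuous_subspaceT; exact: Phi_cont.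
pose B := [set c : V | nq (c - v) <= nq v].
have cPB : compact (Phi @` D `&` B) by apply: compact_closedI => //; exact: closed_nqle.
have PB0 : (Phi @` D `&` B) (0 : V).
  split; last by rewrite /B /= sub0r nqN.
  exists (fun _ => (0, 0)).
    move=> i; split => /=; last by right.
    by rewrite /= in_itv /= lexx M0.
  by rewrite /Phi big1 // => i _; rewrite scale0r.
have cf : {within (Phi @` D `&` B), continuous (fun w => nq (w - v))}.
  by apply: continuous_subspaceT; exact: nq_cont.
have [cs csP csmin] := compact_EVT_min (ex_intro _ _ PB0) cPB cf.
rewrite inE in csP; case: csP => [[fs Dfs fsE] Bcs].
pose ss := [seq fs i | i <- enum 'I_n & (fs i).2 != 0].
have ssv : cvalid G ss.
  move=> x /mapP [i]; rewrite mem_filter => /andP [nz _] ->.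
  have [/= ] := Dfs i; rewrite in_itv /= => /andP [l0 _] [//|/= h0].
  by rewrite h0 eqxx in nz.
have ssE : cval ss = cs.
  rewrite -fsE /cval /Phi big_map big_filter big_mkcond /= -[RHS]big_enum /=.
  apply: eq_bigr => i _; case: ifPn => // /negPn /eqP ->; by rewrite scaler0.
have MIN : forall s, cvalid G s -> nq (cs - v) <= nq (cval s - v).
  move=> s sv.
  have [big|small] := ltrP (nq v) (nq (cval s - v)).
    exact: le_trans Bcs (ltW big).
  have [s' [sv' sz' e']] := cara sv.
  rewrite -e' in small *; apply: csmin; rewrite inE; split => //.
  exists (fun i => nth (0, 0) s' i); last by rewrite /Phi sum_nth_pad.
  move=> i; have [si|si] := ltnP i (size s'); last first.
    rewrite nth_default //; split => /=; last by right.
    by rewrite in_itv /= lexx M0.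
  have mem := mem_nth (0, 0) si.
  have [l0 Gh] := sv' _ mem.
  split => /=; last by left.
  rewrite in_itv /= l0 /=.
  set x := nth (0, 0) s' i in mem l0 Gh *.
  have e1 : x.1 * c0 <= edot (cval s') w0.
    rewrite edot_cval (perm_big _ (perm_to_rem mem)) big_cons /=.
    apply: (le_trans (_ : x.1 * c0 <= x.1 * edot x.2 w0)); first by rewrite ler_wpM2l // Gw.
    rewrite lerDl big_seq sumr_ge0 // => y /mem_rem ys.
    have [y0 Gy] := sv' _ ys.
    by rewrite mulr_ge0 // (le_trans (ltW c0p)) // Gw.
  have e2 : 2 * edot (cval s') w0 <= nq (cval s') + nq w0 by exact: edot_le.
  have e3 : nq (cval s') <= 4 * nq v.
    have := nqD (cval s' - v) v; rewrite subrK => ->.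
    have := edot_le (cval s' - v) v; lra.
  rewrite /M ler_pdivlMr ?mulr_gt0 //; lra.
pose d := v - cs.
have dn0 : d != 0.
  apply/eqP => /eqP; rewrite subr_eq0 => /eqP vcs; apply: nv; exists ss.
  by rewrite ssE vcs.
exists d; split.
  move=> h Gh.
  suff : 2 * edot d h <= 0 by lra.
  apply: (small_le0 (b := nq h)); first exact: nq_ge0.
  move=> t t0 _.
  have sv2 : cvalid G (ss ++ [:: (t, h)]).
    apply: cvalid_cat => // x; rewrite inE => /eqP -> /=; split => //; exact: ltW.
  have := MIN _ sv2; rewrite cval_cat ssE cval_cons cval_nil addr0 /=.
  have -> : cs + t *: h - v = - d + t *: h by rewrite /d opprB addrAC.
  have -> : cs - v = - d by rewrite /d opprB.
  rewrite nqD nqN edotNl edotZr nqZ => H.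
  have : t * (2 * edot d h) <= t * (t * nq h) by nra.
  by rewrite ler_pM2l.
have dcs : 0 <= edot d cs.
  suff : - (2 * edot d cs) <= 0 by lra.
  apply: (small_le0 (b := nq cs)); first exact: nq_ge0.
  move=> t t0 t1.
  have sv2 : cvalid G (cscl (1 - t) ss) by apply: cvalid_scale => //; lra.
  have := MIN _ sv2; rewrite cval_scale ssE.
  have -> : (1 - t) *: cs - v = - d - t *: cs.
    by rewrite /d opprB scalerBl scale1r addrAC.
  have -> : cs - v = - d by rewrite /d opprB.
  rewrite nqB nqN edotNl edotZr nqZ => H.
  have : t * (- (2 * edot d cs)) <= t * (t * nq cs) by nra.
  by rewrite ler_pM2l.
have -> : v = d + cs by rewrite /d subrK.
rewrite edotDr.
have : 0 < nq d.
  rewrite lt_neqAle nq_ge0 andbT eq_sym; apply/eqP => /nq_eq0 /eqP.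
  by rewrite (negbTE dn0).
rewrite /nq; lra.
Qed.

End Sep.

Section Cone.
Variables (R : realType) (n : nat).
Notation V := 'rV[R]_n.
Implicit Types u v w c e y z : V.

Definition active (K : set V) y h := K (y - h) /\ nq h = 1.

Lemma nqC u v : nq (u - v) = nq (v - u).
Proof. by rewrite -nqN opprB. Qed.

Lemma active_pos (K : set V) z (r2 : R) y h :
  (forall p, K p -> nq (p - z) <= r2) -> active K y h ->
  (1 - r2) / 2 <= edot h (y - z).
Proof.
move=> Kz [Kp h1]; have := Kz _ Kp.
have -> : y - h - z = (y - z) - h by rewrite addrAC.
rewrite nqB h1 (edotC (y - z)) => H.
have := nq_ge0 (y - z).
rewrite ler_pdivrMr ?ltr0n //; lra.
Qed.

Lemma negc_cont y : continuous (fun p : V => y - p).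
Proof.
move=> x; have h1 : {for x, continuous (fun _ : V => y)} by exact: cst_continuous.
have h2 : {for x, continuous (@id V)} by exact: cvg_id.
exact: (continuousB h1 h2).
Qed.

Lemma active_compact (K : set V) y : compact K -> compact (active K y).
Proof.
move=> cK.
have -> : active K y = (fun p => y - p) @` (K `&` [set p | nq (p - y) = 1]).
  apply/seteqP; split => h.
    by move=> [Kp h1]; exists (y - h); [split => //=; rewrite -nqC opprB addrC subrK h1 | rewrite opprB addrC subrK].
  move=> [p [Kp /= p1] <-]; split; first by rewrite opprB addrC subrK.
  by rewrite -nqC.
apply: continuous_compact; last by apply: compact_closedI => //; exact: closed_nqeq.
by apply: continuous_subspaceT; exact: negc_cont.
Qed.

Lemma CONE (K : set V) z (r2 : R) y v :
  compact K -> r2 < 1 -> (forall p, K p -> nq (p - z) <= r2) ->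
  (forall p, K p -> nq (y - p) <= 1) ->
  (forall w, (forall p, K p -> nq (w - p) <= 1) -> edot v (w - y) <= 0) ->
  exists s, cvalid (active K y) s /\ cval s = v.
Proof.
move=> cK r21 Kz Ky vN.
case: (pselect (exists s, cvalid (active K y) s /\ cval s = v)) => // nv.
pose c0 := (1 - r2) / 2.
have c0p : 0 < c0 by rewrite /c0 divr_gt0 ?ltr0n //; lra.
pose w0 := y - z.
have Gw : forall h, active K y h -> c0 <= edot h w0.
  by move=> h; exact: active_pos.
have [d [dG dv]] := SEP (@active_compact K y cK) c0p Gw nv.
exfalso.
pose a := edot v w0.
pose eps := edot d v / (2 * (`|a| + 1)).
have ap : 0 < 2 * (`|a| + 1) by have := normr_ge0 a; lra.
have epsp : 0 < eps by rewrite /eps divr_gt0.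
have epsE : eps * (2 * (`|a| + 1)) = edot d v by rewrite /eps divfK // lt0r_neq0.
pose d' := d - eps *: w0.
have vd' : 0 < edot v d'.
  rewrite /d' edotBr edotZr -/a (edotC v d).
  have : eps * a <= eps * `|a| by rewrite ler_wpM2l ?ler_norm // ltW.
  have : 0 <= eps * 1 by rewrite mulr1 ltW.
  move: epsE; rewrite !mulrDr mulr1; lra.
pose ka := eps * c0.
have kap : 0 < ka by rewrite mulr_gt0.
have d'G : forall h, active K y h -> edot d' h <= - ka.
  move=> h Gh; rewrite /d' edotBl edotZl (edotC w0).
  have := dG h Gh; have : eps * c0 <= eps * edot h w0 by rewrite ler_wpM2l ?Gw // ltW.
  rewrite /ka; lra.
pose K1 := K `&` [set p | - ka / 2 <= edot d' (y - p)].
have cK1 : compact K1.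
  apply: compact_closedI => //.
  have -> : [set p | - ka / 2 <= edot d' (y - p)] =
            (fun p => edot d' (y - p)) @^-1` [set x | - ka / 2 <= x] by [].
  apply: preimage_closed; last exact: closed_ge.
  move=> x _; apply: edot_cont; [exact: cst_continuous | exact: negc_cont].
have K1lt : forall p, K1 p -> nq (p - y) < 1.
  move=> p [Kp /= Hp]; rewrite lt_neqAle -nqC Ky // andbT; apply/eqP => E.
  have act : active K y (y - p) by split; [rewrite opprB addrC subrK | rewrite E].
  have := d'G _ act; move: Hp; rewrite ler_pdivrMr ?ltr0n //; lra.
have [m1 [m11 m1K1]] : exists m1, m1 < 1 /\ forall p, K1 p -> nq (p - y) <= m1.
  case: (pselect (K1 !=set0)) => [K1n|K1e]; last first.
    exists 0; split => // p K1p; exfalso; apply: K1e; by exists p.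
  have cf : {within K1, continuous (fun p => nq (p - y))}.
    by apply: continuous_subspaceT; exact: nq_cont.
  have [p1 p1K pmax] := compact_EVT_max K1n cK1 cf.
  rewrite inE in p1K.
  exists (nq (p1 - y)); split; first exact: K1lt.
  by move=> p K1p; apply: pmax; rewrite inE.
pose D2 := nq d' + 1.
have D2p : 0 < D2 by have := nq_ge0 d'; rewrite /D2; lra.
pose t := Num.min (ka / D2) (Num.min ((1 - m1) / (2 * D2)) 1).
have tp : 0 < t.
  rewrite /t !lt_min divr_gt0 // ?ltr01 ?divr_gt0 ?mulr_gt0 ?ltr0n //; lra.
have t1 : t <= 1 by rewrite /t !ge_min lexx !orbT.
have t2 : t * D2 <= ka.
  have : t <= ka / D2 by rewrite /t ge_min lexx.
  by rewrite ler_pdivlMr.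
have t3 : 2 * t * D2 <= 1 - m1.
  have : t <= (1 - m1) / (2 * D2) by rewrite /t !ge_min lexx orbT.
  rewrite ler_pdivlMr ?mulr_gt0 ?ltr0n //; lra.
pose w := y + t *: d'.
have wK : forall p, K p -> nq (w - p) <= 1.
  move=> p Kp.
  have -> : w - p = (y - p) + t *: d' by rewrite /w addrAC.
  rewrite nqD edotZr nqZ.
  have hy := Ky _ Kp.
  have hn := nq_ge0 d'.
  have q1 : t ^+ 2 * nq d' <= t * D2.
    rewrite expr2 -mulrA ler_wpM2l ?ltW //; rewrite /D2.
    have : t * nq d' <= 1 * nq d' by rewrite ler_wpM2r.
    lra.
  case: (pselect (K1 p)) => [K1p|nK1p].
    have hm := m1K1 _ K1p; rewrite nqC in hm.
    have e2 := edot_le (y - p) d'.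
    have q2 : t * (2 * edot (y - p) d') <= t * D2.
      by rewrite ler_wpM2l ?ltW //; rewrite /D2; lra.
    lra.
  have hlt : edot d' (y - p) < - ka / 2.
    rewrite ltNge; apply/negP => H; apply: nK1p; split => //.
  rewrite (edotC (y - p)).
  have q2 : t * (2 * edot d' (y - p)) <= t * (- ka).
    rewrite ler_wpM2l ?ltW //.
    move: hlt; rewrite ltr_pdivlMr ?ltr0n //; lra.
  have : t * nq d' <= t * D2 by rewrite ler_wpM2l ?ltW // /D2; lra.
  have : t * (t * D2) <= t * ka by apply: ler_wpM2l; [exact: ltW | exact: t2].
  rewrite expr2 in q1.
  nra.
have := vN w wK.
rewrite /w addrAC subrr add0r edotZr.
have : 0 < t * edot v d' by rewrite mulr_gt0.
lra.
Qed.

End Cone.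

Section Geo.
Variables (R : realType) (n : nat).
Notation V := 'rV[R]_n.
Implicit Types a b u v w c e y z g h : V.
Implicit Types s : seq (R * V).

Lemma in_cdual2 a b w : cdual [set a; b] w <-> nq (w - a) <= 1 /\ nq (w - b) <= 1.
Proof.
rewrite in_cdual; split => [H|[H1 H2] c].
  by split; apply: H; [left | right].
by case => ->.
Qed.

Lemma unit_pos (l t : R) h u : l *: h != 0 -> 0 <= l -> 0 <= t ->
  l *: h = t *: u -> nq h = 1 -> nq u = 1 -> h = u.
Proof.
move=> lh0 l0 t0 E h1 u1.
have ln0 : l != 0 by apply: contraNneq lh0 => ->; rewrite scale0r.
have : nq (l *: h) = nq (t *: u) by rewrite E.
rewrite !nqZ h1 u1 !mulr1 => /eqP; rewrite eqrXn2 // => /eqP lt.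
by move: E; rewrite lt => /scalerI; apply; rewrite -lt.
Qed.


Lemma cval_nz_term s : cval s != 0 -> exists2 x, x \in s & x.1 *: x.2 != 0.
Proof.
elim: s => [|x s IH]; first by rewrite cval_nil eqxx.
rewrite cval_cons => H.
have [x0|x0] := eqVneq (x.1 *: x.2) 0.
  rewrite x0 add0r in H; have [y ys yn] := IH H.
  by exists y => //; rewrite in_cons ys orbT.
by exists x => //; rewrite mem_head.
Qed.

Lemma ray_cval g s : (forall x, x \in s -> pos_ray g (x.1 *: x.2)) -> pos_ray g (cval s).
Proof.
elim: s => [|x s IH] H.
  by exists 0; rewrite cval_nil scale0r; split.
rewrite cval_cons.
have [t [t0 ->]] := H x (mem_head _ _).
have [t' [t0' ->]] : pos_ray g (cval s).
  by apply: IH => y ys; apply: H; rewrite in_cons ys orbT.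
by exists (t + t'); rewrite scalerDl; split => //; rewrite addr_ge0.
Qed.

Lemma coef_bound (P : V -> Prop) s w0 (c0 : R) x :
  cvalid P s -> (forall h, P h -> c0 <= edot h w0) -> 0 <= c0 -> x \in s ->
  x.1 * c0 <= edot (cval s) w0.
Proof.
move=> sv Pw c00 mem.
rewrite edot_cval (perm_big _ (perm_to_rem mem)) big_cons /=.
have [l0 Gh] := sv _ mem.
apply: (le_trans (_ : x.1 * c0 <= x.1 * edot x.2 w0)); first by rewrite ler_wpM2l // Pw.
rewrite lerDl big_seq sumr_ge0 // => y /mem_rem ys.
have [y0 Gy] := sv _ ys.
by rewrite mulr_ge0 // (le_trans c00) // Pw.
Qed.

Lemma cval_rem x s : x \in s -> cval s = x.1 *: x.2 + cval (rem x s).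
Proof. by move=> mem; rewrite /cval (perm_big _ (perm_to_rem mem)) big_cons. Qed.

Lemma cvalid_rem P x s : cvalid P s -> cvalid P (rem x s).
Proof. by move=> H y /mem_rem /H. Qed.

Lemma nrmz_scale (t : R) g : 0 < t -> nq g = 1 -> nrmz (t *: g) = g.
Proof.
move=> t0 g1; rewrite /nrmz enormZ gtr0_norm //.
have -> : enorm g = 1 by apply/enorm_eq1.
by rewrite mulr1 scalerA mulVf ?scale1r // lt0r_neq0.
Qed.

Lemma enorm_nrmz c : c != 0 -> enorm (nrmz c) = 1.
Proof. by move=> c0; apply/enorm_eq1; exact: nq_nrmz. Qed.

Lemma unitvec : (0 < n)%N -> exists e : V, nq e = 1.
Proof.
move=> n0; exists (delta_mx 0 (Ordinal n0)).
rewrite /nq /edot (bigD1 (Ordinal n0)) //= big1 ?addr0.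
  by rewrite !mxE !eqxx mulr1.
by move=> j /negbTE jn; rewrite !mxE jn andbF mulr0.
Qed.

Lemma parallelogram a b : nq (a - b) + nq (a + b) = 2 * nq a + 2 * nq b.
Proof. rewrite nqB nqD; ring. Qed.

Lemma far_apart w a b : nq (w - a) <= 1 -> nq (w - b) <= 1 -> nq (a - b) <= 4.
Proof.
move=> h1 h2; have := parallelogram (w - b) (w - a).
have -> : w - b - (w - a) = a - b by rewrite opprB addrC addrA subrK.
have := nq_ge0 (w - b + (w - a)); lra.
Qed.

End Geo.

Section Core.
Variables (R : realType) (n : nat).
Notation V := 'rV[R]_n.
Implicit Types a b u v w c e y g h p q : V.
Implicit Types s : seq (R * V).
Variables (K : set V) (z : V) (r2 : R).
Hypotheses (hK : cdual (cdual K) = K) (r21 : r2 < 1)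
  (Kz : forall p, K p -> nq (p - z) <= r2) (cK : compact K).
Local Notation L := (cdual K).
Local Notation N y := (pos_cone (unit_normals (cdual K) y)).

Lemma K_in p : K p <-> forall w, L w -> nq (p - w) <= 1.
Proof. by rewrite -{1}hK in_cdual. Qed.

Lemma subK y x : y - (y - x) = x.
Proof. by rewrite opprB addrC subrK. Qed.

Lemma act_ALG y h w : active K y h -> L w ->
  nq h = 1 /\ 2 * edot h (w - y) + nq (w - y) <= 0.
Proof.
move=> [Kp h1] /in_cdual /(_ _ Kp).
have -> : w - (y - h) = (w - y) + h by rewrite opprB addrA addrAC.
rewrite nqD h1 (edotC (w - y)) => H; split => //; lra.
Qed.

Lemma act_normal y h w : active K y h -> L w -> edot h (w - y) <= 0.
Proof. by move=> Ha Lw; have [_ H] := act_ALG Ha Lw; have := nq_ge0 (w - y); lra. Qed.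

Lemma N_normal y v : N y v -> forall w, L w -> edot v (w - y) <= 0.
Proof.
move=> [t [u [t0 [[_ uN] ->]]]] w Lw.
by rewrite edotZl; apply: mulr_ge0_le0 => //; exact: uN.
Qed.

Lemma cval_in_N y s u0 : unit_normals L y u0 -> cvalid (active K y) s -> N y (cval s).
Proof.
move=> u0N sv.
have [c0|c0] := eqVneq (cval s) 0.
  by exists 0, u0; rewrite c0 scale0r; split.
exists (enorm (cval s)), (nrmz (cval s)); split; first exact: enorm_ge0.
split; last by rewrite nrmzK.
split; first exact: enorm_nrmz.
move=> w Lw; rewrite /nrmz edotZl mulr_ge0_le0 ?invr_ge0 ?enorm_ge0 //.
rewrite edot_cval big_seq sumr_le0 // => x xs.
have [l0 Ha] := sv x xs.
by rewrite mulr_ge0_le0 //; exact: act_normal Ha Lw.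
Qed.

Lemma face_all y u s : extremal_ray (N y) (pos_ray u) -> unit_normals L y u ->
  cvalid (active K y) s -> pos_ray u (cval s) ->
  forall x, x \in s -> pos_ray u (x.1 *: x.2).
Proof.
move=> [_ [_ F]] uN; elim: s => [//|x s IH] sv.
have [l0 Ha sv'] := cvalid_consE sv.
rewrite cval_cons => H.
have Nx : N y (x.1 *: x.2).
  have := cval_in_N uN (_ : cvalid (active K y) [:: x]).
  rewrite cval_cons cval_nil addr0; apply.
  by move=> x'; rewrite inE => /eqP ->.
have [rx rs] := F _ _ Nx (cval_in_N uN sv') H.
move=> x'; rewrite in_cons => /orP [/eqP -> //|]; exact: IH.
Qed.

Lemma term_eq u (P : V -> Prop) s : (forall h, P h -> nq h = 1) -> cvalid P s ->
  (forall x, x \in s -> pos_ray u (x.1 *: x.2)) -> cval s = u -> nq u = 1 ->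
  exists2 x, x \in s & x.2 = u.
Proof.
move=> P1 sv rays cs u1.
have un0 : cval s != 0.
  rewrite cs; apply/eqP => u0; move: u1; rewrite u0 nq0 => /eqP; by rewrite eq_sym oner_eq0.
have [x xs xn] := cval_nz_term un0.
exists x => //; have [t [t0 E]] := rays x xs.
have [l0 Px] := sv x xs.
exact: (unit_pos xn l0 t0 E (P1 _ Px) u1).
Qed.

Lemma L_of_bdry y : bdry L y -> L y.
Proof.
move=> [cl _]; have := @cdual_closed _ _ K; rewrite closure_id => E.
by rewrite E.
Qed.

Theorem SUP y u : bdry L y -> unit_normals L y u -> extremal_ray (N y) (pos_ray u) ->
  ext_c K (y - u).
Proof.
move=> By uN ext.
have Ly := L_of_bdry By.
have [/enorm_eq1 u1 uN'] := uN.
have key : forall K', K' `<=` K -> compact K' ->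
    (forall w, (forall p, K' p -> nq (w - p) <= 1) -> edot u (w - y) <= 0) -> K' (y - u).
  move=> K' sK cK' nor.
  have Kz' : forall p, K' p -> nq (p - z) <= r2 by move=> p /sK; exact: Kz.
  have Ky' : forall p, K' p -> nq (y - p) <= 1 by move=> p /sK; move/in_cdual: Ly; apply.
  have [s [sv cs]] := CONE cK' r21 Kz' Ky' nor.
  have sv2 : cvalid (active K y) s.
    by apply: cvalid_sub sv => h [h1 h2]; split => //; exact: sK.
  have ray_cs : pos_ray u (cval s) by rewrite cs; exists 1; rewrite scale1r; split.
  have rays := face_all ext uN sv2 ray_cs.
  have [x xs xu] := term_eq (P := active K' y) (fun h Hh => Hh.2) sv rays cs u1.
  have [_ [Kx _]] := sv x xs.
  by rewrite -xu.
split.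
  apply: key => //.
  move=> w Hw; apply: uN'; exact/in_cdual.
move=> q1 q2 Kq1 Kq2 hconv.
have : [set q1; q2] (y - u).
  apply: key.
  - by move=> p [->|->].
  - by apply: compactU; exact: compact_set1.
  move=> w Hw.
  have H1 : cdual [set q1; q2] w by exact/in_cdual.
  move/in_cdual: hconv => /(_ w H1).
  have -> : y - u - w = - ((w - y) + u) by rewrite opprD opprB [RHS]addrAC.
  rewrite nqN nqD u1 (edotC (w - y)) => H.
  have := nq_ge0 (w - y); lra.
by case => ->; [left | right].
Qed.

Lemma int_not_ext x e (eps : R) : 0 < eps -> nq e = 1 ->
  K (x + eps *: e) -> K (x - eps *: e) -> ext_c K x -> False.
Proof.
move=> e0 e1 K1 K2 [Kx ext].
have : conv_c [set x + eps *: e; x - eps *: e] x.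
  apply/in_cdual => w /in_cdual2 [h1 h2].
  have := parallelogram (w - x) (eps *: e).
  have -> : w - x - eps *: e = w - (x + eps *: e) by rewrite opprD addrA.
  have -> : w - x + eps *: e = w - (x - eps *: e) by rewrite opprB [RHS]addrCA [RHS]addrC.
  rewrite nqZ e1 nqC => H.
  have := sqr_ge0 eps; lra.
move=> /(ext _ _ K1 K2) H.
have E : eps *: e = 0.
  case: H => /eqP; rewrite -subr_eq0 addrAC subrr add0r ?oppr_eq0 => /eqP //.
have := nqZ eps e; rewrite E nq0 e1 mulr1 => /esym /eqP.
by rewrite sqrf_eq0 (gt_eqF e0).
Qed.

Lemma zL : L z.
Proof. apply/in_cdual => p Kp; rewrite nqC; apply: le_trans (Kz Kp) (ltW r21). Qed.

Lemma exists_far x : (0 < n)%N -> ext_c K x -> exists2 y, L y & nq (y - x) = 1.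
Proof.
move=> n0 xe; have Kx := xe.1.
have xL : forall w, L w -> nq (w - x) <= 1.
  by move=> w Lw; move/K_in: Kx => /(_ w Lw); rewrite nqC.
have cL : compact L.
  apply: (@compact_of _ _ _ x 1); first exact: cdual_closed.
  by move=> w Lw; rewrite enorm_le1; exact: xL.
have cf : {within L, continuous (fun w => nq (w - x))}.
  by apply: continuous_subspaceT; exact: nq_cont.
have [y yL ymax] := compact_EVT_max (ex_intro _ z zL) cL cf.
rewrite inE in yL; exists y => //.
have y1 := xL _ yL.
apply/eqP; rewrite eq_le y1 /=; rewrite leNgt; apply/negP => ylt.
pose rho := enorm (y - x).
have rho1 : rho < 1.
  rewrite lt_neqAle enorm_le1 y1 andbT; apply/eqP => /enorm_eq1 E.
  by move: ylt; rewrite E ltxx.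
have [e e1] := @unitvec R n n0.
pose eps := 1 - rho.
have eps0 : 0 < eps by rewrite /eps; lra.
have wle : forall w, L w -> enorm (w - x) <= rho.
  move=> w Lw; rewrite /rho /enorm -/(nq _) -/(nq _) ler_sqrt ?nq_ge0 //.
  by apply: ymax; rewrite inE.
have Kpm : forall (sg : R), `|sg| = 1 -> K (x + (sg * eps) *: e).
  move=> sg sg1; apply/K_in => w Lw; rewrite -enorm_le1.
  have -> : x + (sg * eps) *: e - w = - (w - x) + (sg * eps) *: e.
    by rewrite opprB addrC addrA [X in X + _]addrC.
  apply: le_trans (enormD _ _) _.
  rewrite enormZ normrM sg1 mul1r gtr0_norm //.
  have -> : enorm e = 1 by apply/enorm_eq1.
  rewrite -scaleN1r enormZ normrN normr1 mul1r.
  have := wle _ Lw; rewrite /eps; lra.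
apply: (int_not_ext eps0 e1 _ _ xe).
  by have := Kpm 1 (normr1 _); rewrite mul1r.
by have := Kpm (-1) (normrN1 _); rewrite mulN1r scaleNr.
Qed.

Lemma ext_all x y s (tau : R) : ext_c K x -> L y -> nq (y - x) = 1 ->
  cvalid (active K y) s -> cval s = tau *: (y - x) -> 0 <= tau ->
  forall t, t \in s -> pos_ray (y - x) (t.1 *: t.2).
Proof.
move=> xe Ly g1 sv cs tau0 t ts.
set g := y - x in g1 cs *.
have ga : active K y g by split; rewrite ?subK //; exact: xe.1.
pose c0 := (1 - r2) / 2.
have c0p : 0 < c0 by rewrite /c0 divr_gt0 ?ltr0n // subr_gt0.
pose w0 := y - z.
have Gw : forall h, active K y h -> c0 <= edot h w0.
  by move=> h; exact: active_pos.
have [l0 ha] := sv t ts.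
have [lz|lp] := eqVneq t.1 0.
  by exists 0; rewrite lz !scale0r; split.
have lpos : 0 < t.1 by rewrite lt_neqAle eq_sym lp l0.
have [hg|hng] := eqVneq t.2 g.
  by exists t.1; rewrite hg; split.
exfalso.
have h1 : nq t.2 = 1 := ha.2.
have hn0 : t.1 *: t.2 != 0.
  apply/eqP => /eqP; rewrite scaler_eq0 (negbTE lp) /= => /eqP h0.
  by move: h1; rewrite h0 nq0 => /eqP; rewrite eq_sym oner_eq0.
have bnd := coef_bound sv Gw (ltW c0p) ts.
rewrite cs edotZl in bnd.
have gw := Gw _ ga.
have taup : 0 < tau.
  rewrite lt_neqAle tau0 andbT eq_sym; apply/eqP => t0; move: bnd; rewrite t0 mul0r.
  have : 0 < t.1 * c0 by rewrite mulr_gt0.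
  lra.
set b := cval (rem t s).
have E : t.1 *: t.2 + b = tau *: g by rewrite -cs (cval_rem ts).
have [b0|bn0] := eqVneq b 0.
  rewrite b0 addr0 in E.
  by move/eqP: hng; apply; exact: (unit_pos hn0 l0 tau0 E h1 g1).
pose q := y - nrmz b.
have svr := cvalid_rem (x:=t) sv.
have qK : K q.
  apply/K_in => w Lw.
  have sv' : cvalid (fun h => nq h = 1 /\ 2 * edot h (w - y) + nq (w - y) <= 0) (rem t s).
    by apply: cvalid_sub svr => h Hh; exact: act_ALG Hh Lw.
  have := ALGL sv' bn0; rewrite -/b.
  have -> : q - w = - ((w - y) + nrmz b) by rewrite /q opprD opprB [RHS]addrAC.
  rewrite nqN (nqD (w - y) (nrmz b)) nq_nrmz // (edotC (w - y)); lra.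
have pK : K (y - t.2) := ha.1.
have conv : conv_c [set y - t.2; q] x.
  apply/in_cdual => w /in_cdual2 [w1 w2].
  pose l2 := [:: (t.1, t.2); (enorm b, nrmz b)].
  have sv2 : cvalid (fun h => nq h = 1 /\ 2 * edot h (w - y) + nq (w - y) <= 0) l2.
    move=> x'; rewrite !inE => /orP [] /eqP -> /=.
      split => //; split => //.
      have e1 : w - (y - t.2) = (w - y) + t.2 by rewrite opprB addrA addrAC.
      by move: w1; rewrite e1 (nqD (w - y)) h1 (edotC (w - y)) => H; lra.
    split; first exact: enorm_ge0.
    split; first exact: nq_nrmz.
    have e1 : w - q = (w - y) + nrmz b by rewrite /q opprB addrA addrAC.
    by move: w2; rewrite e1 (nqD (w - y)) nq_nrmz // (edotC (w - y)) => H; lra.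
  have cl2 : cval l2 = tau *: g by rewrite /l2 !cval_cons cval_nil addr0 /= nrmzK // E.
  have gn0 : cval l2 != 0.
    rewrite cl2 scaler_eq0 negb_or gt_eqF //=; apply/eqP => g0.
    by move: g1; rewrite g0 nq0 => /eqP; rewrite eq_sym oner_eq0.
  have := ALGL sv2 gn0; rewrite cl2 nrmz_scale //.
  have -> : x - w = - ((w - y) + g) by rewrite /g addrA subrK opprB.
  rewrite nqN (nqD (w - y) g) g1 (edotC (w - y)); lra.
have [] := xe.2 _ _ pK qK conv => E2.
  by move/eqP: hng; apply; rewrite /g -E2 subK.
have nb : nrmz b = g by rewrite /g -E2 /q subK.
have bE : b = enorm b *: g by rewrite -nb nrmzK.
have E3 : t.1 *: t.2 = (tau - enorm b) *: g.
  by rewrite scalerBl -bE -E addrK.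
have [tb|tb] := lerP 0 (tau - enorm b).
  by move/eqP: hng; apply; exact: (unit_pos hn0 l0 tb E3 h1 g1).
have := Gw _ ha; move=> hw.
have : edot (t.1 *: t.2) w0 = edot ((tau - enorm b) *: g) w0 by rewrite E3.
rewrite !edotZl.
have : 0 < t.1 * edot t.2 w0 by rewrite mulr_gt0 // (lt_le_trans c0p).
have : (tau - enorm b) * edot g w0 < 0 by rewrite nmulr_rlt0 // (lt_le_trans c0p).
lra.
Qed.

Theorem SUB x : (0 < n)%N -> ext_c K x ->
  exists y u, [/\ bdry L y, unit_normals L y u, extremal_ray (N y) (pos_ray u) & x = y - u].
Proof.
move=> n0 xe; have Kx := xe.1.
have [y Ly g1] := exists_far n0 xe.
set g := y - x in g1 *.
have ga : active K y g by split; rewrite ?subK.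
have gn0 : g != 0.
  by apply/eqP => g0; move: g1; rewrite g0 nq0 => /eqP; rewrite eq_sym oner_eq0.
have gN : unit_normals L y g.
  by split; [exact/enorm_eq1 | move=> w Lw; exact: act_normal ga Lw].
have Ky : forall p, K p -> nq (y - p) <= 1 by move/in_cdual: Ly.
exists y, g; split => //; last by rewrite /g subK.
- split; first exact: subset_closure.
  move=> /(interior_move g) [s s0 Ls].
  move/K_in: Kx => /(_ _ Ls).
  have -> : x - (y + s *: g) = - ((1 + s) *: g).
    by rewrite opprD addrA scalerDl scale1r opprD /g opprB.
  rewrite nqN nqZ g1 mulr1 => H.
  have : 1 < (1 + s) ^+ 2 by rewrite expr2; nra.
  lra.
- split; first by exists g.
  split; first by move=> v [t [t0 ->]]; exists t, g.
  move=> a b Na Nb [tau [tau0 E]].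
  have nor : forall v, N y v -> forall w, (forall p, K p -> nq (w - p) <= 1) -> edot v (w - y) <= 0.
    by move=> v Nv w Hw; apply: (N_normal Nv); exact/in_cdual.
  have [sa [sva ca]] := CONE cK r21 Kz Ky (nor _ Na).
  have [sb [svb cb]] := CONE cK r21 Kz Ky (nor _ Nb).
  have sv := cvalid_cat sva svb.
  have cab : cval (sa ++ sb) = tau *: g by rewrite cval_cat ca cb.
  have rays := ext_all xe Ly g1 sv cab tau0.
  split.
    rewrite -ca; apply: ray_cval => t ts; apply: rays; by rewrite mem_cat ts.
  rewrite -cb; apply: ray_cval => t ts; apply: rays; by rewrite mem_cat ts orbT.
Qed.

End Core.

Unset Implicit Arguments.
Set Strict Implicit.

Theorem proposition4p9 (R : realType) (n : nat) (K : set 'rV[R]_n) :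
  (2 <= n)%N -> in_Sn K -> Outrad K < 1 ->
  ext_c K =
  [set x | exists y u : 'rV[R]_n,
      bdry (cdual K) y /\ unit_normals (cdual K) y u /\
      extremal_ray (pos_cone (unit_normals (cdual K) y)) (pos_ray u) /\
      x = y - u].
Proof.
move=> n2 [A KA] Out.
have n0 : (0 < n)%N by lia.
have [e e1] := @unitvec R n n0.
have hK : cdual (cdual K) = K by rewrite KA cdual3.
have e2 : nq ((2 : R) *: e) = 4.
  by rewrite nqZ e1 mulr1; rewrite expr2 -natrM.
case: (pselect (exists a, A a)) => [[a Aa]|nA]; last first.
  have KT : forall x, K x.
    move=> x; rewrite KA; apply/in_cdual => b Ab; exfalso; apply: nA; by exists b.
  have L0 : forall w, ~ cdual K w.
    move=> w /in_cdual /(_ (w + 2 *: e) (KT _)).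
    by rewrite opprD addrA subrr add0r nqN e2; lra.
  apply/seteqP; split => x.
    move=> [_ ext].
    have : conv_c [set x + 2 *: e; x - 2 *: e] x.
      apply/in_cdual => w /in_cdual2 [w1 w2]; exfalso.
      have := far_apart w1 w2.
      have -> : x + 2 *: e - (x - 2 *: e) = 2 *: e + 2 *: e.
        by rewrite opprB addrC addrA subrK.
      by rewrite nqD -/(nq (2 *: e)) e2; lra.
    move=> /(ext _ _ (KT _) (KT _)) [] /eqP; rewrite -subr_eq0 addrAC subrr add0r ?oppr_eq0 => /eqP E;
      by move: e2; rewrite E nq0; lra.
  have L0' : cdual K = set0 by apply/seteqP; split => w // /L0.
  by move=> [y [u [[cl _] _]]]; move: cl; rewrite L0' closure0.
have Ka : forall x, K x -> enorm (x - a) <= 1.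
  by move=> x; rewrite KA => /in_cdual /(_ a Aa); rewrite enorm_le1.
case: (pselect (exists p, K p)) => [[p0 Kp0]|nK]; last first.
  have LT : cdual K = setT.
    by apply/seteqP; split => // w _; apply/in_cdual => p Kp; exfalso; apply: nK; exists p.
  apply/seteqP; split => x.
    by move=> [Kx _]; exfalso; apply: nK; exists x.
  by move=> [y [u [[_ ni] _]]]; exfalso; apply: ni; rewrite LT interiorT.
pose S := [set r : R | exists z : 'rV[R]_n, K `<=` eball z r].
have hS : has_inf S.
  split; first by exists 1, a => x /Ka.
  exists 0 => r [z Kz].
  by apply: le_trans (enorm_ge0 (p0 - z)) _; exact: Kz.
have eps0 : 0 < 1 - inf S by rewrite subr_gt0; exact: Out.
have [r [z Kz] rlt] := inf_adherent eps0 hS.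
have r1 : r < 1 by move: rlt; rewrite addrC subrK.
have r0 : 0 <= r by apply: le_trans (enorm_ge0 (p0 - z)) _; exact: Kz.
have Kz2 : forall p, K p -> nq (p - z) <= r ^+ 2.
  by move=> p /Kz; rewrite /eball /= enorm_le.
have r21 : r ^+ 2 < 1 by rewrite expr2; nra.
have cK : compact K.
  apply: (@compact_of _ _ _ z r); first by rewrite KA; exact: cdual_closed.
  by move=> x /Kz.
apply/seteqP; split => x.
  move=> xe; have [y [u [By uN ext ->]]] := SUB hK r21 Kz2 cK n0 xe.
  by exists y, u.
by move=> [y [u [By [uN [ext ->]]]]]; exact: (SUP r21 Kz2 cK By uN ext).
Qed.
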